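(* In the setting of the context (with assumptions (A.1)–(A.3)), suppose the PMM generates infinite sequences $\{(u_k,v_k)\}$, $\{(z_k,w_k)\}$, $\{\gamma_k\}$, $\{\rho_k\}$; define $x_k=z_{k-1}+\lambda w_{k-1}+\lambda(Cv_k-d)$, $y_k=x_k-\lambda(w_{k-1}-Mu_k)$, and for $k\ge1$ $$\Gamma_k=\sum_{j=1}^k\rho_j\gamma_j,\quad \bar u_k=\frac1{\Gamma_k}\sum_{j=1}^k\rho_j\gamma_ju_j,\quad \bar v_k=\frac1{\Gamma_k}\sum_{j=1}^k\rho_j\gamma_jv_j,$$ $$\bar\epsilon_k^u=\frac1{\Gamma_k}\sum_{j=1}^k\rho_j\gamma_j\langle u_j-\bar u_k,-M^*y_j\rangle,\qquad \bar\epsilon_k^v=\frac1{\Gamma_k}\sum_{j=1}^k\rho_j\gamma_j\langle v_j-\bar v_k,-C^*x_j\rangle.$$ Let $d_0$ be the distance from $(z_0,w_0)$ to $S_e(\partial h_1,\partial h_2)$. Then for every integer $k\ge1$, $$\bar\epsilon_k^u+\bar\epsilon_k^v\le\frac1{\Gamma_k}\left[\frac1{\Gamma_k}\sum_{j=1}^k\rho_j\gamma_j\left(\lambda^2\|Mu_j+Cv_j-d\|^2+\|d-Cv_j-w_{j-1}\|^2\right)+4d_0^2\right].$$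
   Context: Let $f:\mathbb{R}^{m_1}\to(-\infty,\infty]$, $g:\mathbb{R}^{m_2}\to(-\infty,\infty]$ be proper closed convex, $M:\mathbb{R}^{m_1}\to\mathbb{R}^n$, $C:\mathbb{R}^{m_2}\to\mathbb{R}^n$ linear, $d\in\mathbb{R}^n$; consider $\min\{f(u)+g(v):Mu+Cv=d\}$ with Lagrangian $L(u,v,z)=f(u)+g(v)+\langle Mu+Cv-d,z\rangle$. A saddle point is $(u^*,v^*,z^* )$ with $L(u^*,v^*,z^* )$ finite and $\min_{(u,v)}L(u,v,z^* )=L(u^*,v^*,z^* )=\max_zL(u^*,v^*,z)$. Let $h_1(z)=f^*(-M^*z)$, $h_2(z)=g^*(-C^*z)+\langle d,z\rangle$ ($^*$ on functions = Fenchel conjugate, on operators = adjoint), and $S_e(\partial h_1,\partial h_2)=\{(z,w)\in\mathbb{R}^n\times\mathbb{R}^n:-w\in\partial h_1(z),\ w\in\partial h_2(z)\}$ (a closed convex set). Standing assumptions: (A.1) $L$ has a saddle point; (A.2) $\mathrm{ri}(\mathrm{dom} f^* )\cap\mathrm{range}(M^* )\ne\emptyset$; (A.3) $\mathrm{ri}(\mathrm{dom} g^* )\cap\mathrm{range}(C^* )\ne\emptyset$. PMM: given $(z_0,w_0)\in\mathbb{R}^n\times\mathbb{R}^n$, $\lambda>0$, $\bar\rho\in[0,1)$, for $k=1,2,\dots$: (1) let $v_k$ be a minimizer of $g(v)+\langle z_{k-1}+\lambda w_{k-1},Cv-d\rangle+\frac\lambda2\|Cv-d\|^2$ and $u_k$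 a minimizer of $f(u)+\langle z_{k-1}+\lambda(Cv_k-d),Mu\rangle+\frac\lambda2\|Mu\|^2$; (2) if $\|Mu_k+Cv_k-d\|+\|Mu_k-w_{k-1}\|=0$ stop; otherwise set $\gamma_k=\dfrac{\lambda\|Cv_k-d+w_{k-1}\|^2+\lambda\langle d-Cv_k-Mu_k,w_{k-1}-Mu_k\rangle}{\|Mu_k+Cv_k-d\|^2+\lambda^2\|Mu_k-w_{k-1}\|^2}$; (3) choose $\rho_k\in[1-\bar\rho,1+\bar\rho]$ and set $z_k=z_{k-1}+\rho_k\gamma_k(Mu_k+Cv_k-d)$, $w_k=w_{k-1}-\rho_k\gamma_k\lambda(w_{k-1}-Mu_k)$. *)

(* Defs.v *)
(* Euclidean spaces R^m are row vectors 'rV[R]_m;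
   a linear map M : R^m1 -> R^n is a matrix M : 'M[R]_(m1,n) acting by u |-> u *m M;
   its adjoint is z |-> z *m M^T. *)
From HB Require Import structures.
From mathcomp Require Import all_boot all_order all_algebra.
From mathcomp Require Import all_classical all_reals all_analysis.
Set Implicit Arguments. Unset Strict Implicit. Unset Printing Implicit Defensive.
Import Order.TTheory GRing.Theory Num.Theory.
Import numFieldNormedType.Exports.
Local Open Scope classical_set_scope.
Local Open Scope ring_scope.

Section Defs.
Variable R : realType.

Definition dotp m (a b : 'rV[R]_m) : R := \sum_(i < m) a 0 i * b 0 i.
Definition sqn m (a : 'rV[R]_m) : R := dotp a a.
Definition enorm m (a : 'rV[R]_m) : R := Num.sqrt (sqn a).

Definition proper_fun m (f : 'rV[R]_m -> \bar R) : Prop :=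
  (forall x, f x != -oo%E) /\ (exists x, f x \is a fin_num).
Definition closed_fun m (f : 'rV[R]_m -> \bar R) : Prop :=
  forall t : R, closed [set x | (f x <= t%:E)%E].
Definition convex_fun m (f : 'rV[R]_m -> \bar R) : Prop :=
  forall (x y : 'rV[R]_m) (t : R), 0 < t < 1 ->
    (f (t *: x + (1 - t) *: y)%R <= t%:E * f x + (1 - t)%R%:E * f y)%E.
Definition pcc m (f : 'rV[R]_m -> \bar R) : Prop :=
  [/\ proper_fun f, closed_fun f & convex_fun f].

Definition fconj m (f : 'rV[R]_m -> \bar R) (p : 'rV[R]_m) : \bar R :=
  ereal_sup [set ((dotp p x)%:E - f x)%E | x in [set: 'rV[R]_m]].

Definition edom m (f : 'rV[R]_m -> \bar R) : set 'rV[R]_m :=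
  [set x | (f x < +oo)%E].

Definition aff_hull m (A : set 'rV[R]_m) : set 'rV[R]_m :=
  [set y | exists (k : nat) (p : 'I_k -> 'rV[R]_m) (c : 'I_k -> R),
     [/\ forall i, A (p i), \sum_(i < k) c i = 1 & y = \sum_(i < k) c i *: p i]].
Definition rel_int m (A : set 'rV[R]_m) : set 'rV[R]_m :=
  [set x | A x /\ exists e : R, 0 < e /\
     forall y, aff_hull A y -> enorm (y - x) < e -> A y].

Definition subdiff n (h : 'rV[R]_n -> \bar R) (z : 'rV[R]_n) : set 'rV[R]_n :=
  [set w | h z \is a fin_num /\
     forall z', (h z + (dotp w (z' - z))%:E <= h z')%E].

Definition lagr m1 m2 n (f : 'rV[R]_m1 -> \bar R) (g : 'rV[R]_m2 -> \bar R)
  (M : 'M[R]_(m1, n)) (C : 'M[R]_(m2, n)) (d : 'rV[R]_n) u v z : \bar R :=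
  (f u + g v + (dotp (u *m M + v *m C - d) z)%:E)%E.

Definition saddle_point m1 m2 n f g (M : 'M[R]_(m1, n)) (C : 'M[R]_(m2, n)) d
  (u0 : 'rV[R]_m1) (v0 : 'rV[R]_m2) (z0 : 'rV[R]_n) : Prop :=
  [/\ lagr f g M C d u0 v0 z0 \is a fin_num,
      (forall u v, (lagr f g M C d u0 v0 z0 <= lagr f g M C d u v z0)%E) &
      (forall z, (lagr f g M C d u0 v0 z <= lagr f g M C d u0 v0 z0)%E)].

Definition h1 m1 n (f : 'rV[R]_m1 -> \bar R) (M : 'M[R]_(m1, n)) (z : 'rV[R]_n) :=
  fconj f (- (z *m M^T)).
Definition h2 m2 n (g : 'rV[R]_m2 -> \bar R) (C : 'M[R]_(m2, n)) (d z : 'rV[R]_n) :=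
  (fconj g (- (z *m C^T)) + (dotp d z)%:E)%E.
Definition Se m1 m2 n f g (M : 'M[R]_(m1, n)) (C : 'M[R]_(m2, n)) (d : 'rV[R]_n)
  : set ('rV[R]_n * 'rV[R]_n) :=
  [set zw | subdiff (h1 f M) zw.1 (- zw.2) /\ subdiff (h2 g C d) zw.1 zw.2].

Definition dist2 n (p : 'rV[R]_n * 'rV[R]_n) (S : set ('rV[R]_n * 'rV[R]_n)) : R :=
  Num.sqrt (inf [set sqn (p.1 - q.1) + sqn (p.2 - q.2) | q in S]).

(* The PMM iteration: the sequences (indexed from 1 for u,v,gamma,rho,
   from 0 for z,w) are generated by PMM and it never stops. *)
Definition PMM_run m1 m2 n (f : 'rV[R]_m1 -> \bar R) (g : 'rV[R]_m2 -> \bar R)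
  (M : 'M[R]_(m1, n)) (C : 'M[R]_(m2, n)) (d : 'rV[R]_n) (lam rhob : R)
  (u : nat -> 'rV[R]_m1) (v : nat -> 'rV[R]_m2) (z w : nat -> 'rV[R]_n)
  (gam rho : nat -> R) : Prop :=
  forall k, (1 <= k)%N ->
  [/\ (forall v',
         (g (v k) + (dotp (z k.-1 + lam *: w k.-1) (v k *m C - d)
                     + lam / 2 * sqn (v k *m C - d))%:E
          <= g v' + (dotp (z k.-1 + lam *: w k.-1) (v' *m C - d)
                     + lam / 2 * sqn (v' *m C - d))%:E)%E),
      (forall u',
         (f (u k) + (dotp (z k.-1 + lam *: (v k *m C - d)) (u k *m M)
                     + lam / 2 * sqn (u k *m M))%:E
          <= f u' + (dotp (z k.-1 + lam *: (v k *m C - d)) (u' *m M)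
                     + lam / 2 * sqn (u' *m M))%:E)%E),
      enorm (u k *m M + v k *m C - d) + enorm (u k *m M - w k.-1) != 0,
      gam k = (lam * sqn (v k *m C - d + w k.-1)
               + lam * dotp (d - v k *m C - u k *m M) (w k.-1 - u k *m M))
              / (sqn (u k *m M + v k *m C - d) + lam ^+ 2 * sqn (u k *m M - w k.-1)) /\
      1 - rhob <= rho k <= 1 + rhob &
      (z k = z k.-1 + (rho k * gam k) *: (u k *m M + v k *m C - d)
      /\ w k = w k.-1 - (rho k * gam k * lam) *: (w k.-1 - u k *m M))].

End Defs.

(* Main.v *)
Require Import Defs.
From HB Require Import structures.
From mathcomp Require Import all_boot all_order all_algebra.
From mathcomp Require Import all_classical all_reals all_analysis.
From mathcomp Require Import ring lra.
Import Order.TTheory GRing.Theory Num.Theory.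
Import numFieldNormedType.Exports.
Local Open Scope classical_set_scope.
Local Open Scope ring_scope.

Ltac vec_ring :=
  rewrite /sqn /dotp;
  repeat progress (rewrite ?(mulrDr, mulrBr, mulrN, mulr_sumr) -?sumrN -?big_split /=);
  apply: eq_bigr => i _; rewrite !mxE; ring.

Section Aux.
Variable R : realType.

Lemma sqn_ge0 n (a : 'rV[R]_n) : 0 <= sqn a.
Proof. rewrite /sqn /dotp; apply: sumr_ge0 => i _; rewrite -expr2; exact: sqr_ge0. Qed.

Lemma sqn_eq0 n (a : 'rV[R]_n) : sqn a = 0 -> a = 0.
Proof.
move=> H; apply/rowP => i; rewrite mxE.
have H2 : a 0 i * a 0 i = 0.
  apply: (@psumr_eq0P R _ xpredT (fun i => a 0 i * a 0 i) _ H i isT).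
  by move=> j _; rewrite -expr2; exact: sqr_ge0.
by move/eqP: H2; rewrite mulf_eq0 orbb => /eqP.
Qed.

Lemma dotpC n (a b : 'rV[R]_n) : dotp a b = dotp b a.
Proof. by rewrite /dotp; apply: eq_bigr => i _; rewrite mulrC. Qed.

Lemma dotpDr n (a b c : 'rV[R]_n) : dotp a (b + c) = dotp a b + dotp a c.
Proof. vec_ring. Qed.

Lemma dotp0r n (a : 'rV[R]_n) : dotp a 0 = 0.
Proof. by rewrite /dotp big1 // => i _; rewrite mxE mulr0. Qed.

Lemma dotpZr n (a b : 'rV[R]_n) c : dotp a (c *: b) = c * dotp a b.
Proof. vec_ring. Qed.

Lemma dotp_sumr n (a : 'rV[R]_n) (I : Type) (r : seq I) (P : pred I) (F : I -> 'rV[R]_n) :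
  dotp a (\sum_(j <- r | P j) F j) = \sum_(j <- r | P j) dotp a (F j).
Proof.
elim/big_rec2: _ => [|j x y _ <-]; first exact: dotp0r.
exact: dotpDr.
Qed.

Lemma dotp_suml n (a : 'rV[R]_n) (I : Type) (r : seq I) (P : pred I) (F : I -> 'rV[R]_n) :
  dotp (\sum_(j <- r | P j) F j) a = \sum_(j <- r | P j) dotp (F j) a.
Proof. rewrite dotpC dotp_sumr; apply: eq_bigr => j _; exact: dotpC. Qed.

Lemma dotp_mulmxT m n (a : 'rV[R]_m) (b : 'rV[R]_n) (M : 'M[R]_(m, n)) :
  dotp a (b *m M^T) = dotp (a *m M) b.
Proof.
rewrite /dotp.
transitivity (\sum_(i < m) \sum_(j < n) a 0 i * M i j * b 0 j).
  apply: eq_bigr => i _; rewrite !mxE mulr_sumr; apply: eq_bigr => j _.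
  by rewrite !mxE; ring.
rewrite exchange_big /=; apply: eq_bigr => j _; rewrite !mxE mulr_suml.
by apply: eq_bigr => i _.
Qed.

Lemma sqn_add_le n (a b : 'rV[R]_n) : sqn (a + b) <= 2 * sqn a + 2 * sqn b.
Proof.
have -> : 2 * sqn a + 2 * sqn b = sqn (a + b) + sqn (a - b) by vec_ring.
by rewrite lerDl sqn_ge0.
Qed.

Lemma step_id n (z0 w0 U V d Z W : 'rV[R]_n) (lam rho gam : R) :
  sqn (z0 + (rho * gam) *: (U + V - d) - Z) + sqn (w0 - (rho * gam * lam) *: (w0 - U) - W)
  = sqn (z0 - Z) + sqn (w0 - W) - 2 * (rho * gam) *
     (dotp (z0 + lam *: w0 + lam *: (V - d) - Z) (d - V - W)
      + dotp (z0 + lam *: w0 + lam *: (V - d) - lam *: (w0 - U) - Z) (- U + W))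
    + (rho * gam) * (rho - 2) * (lam * sqn (V - d + w0) + lam * dotp (d - V - U) (w0 - U))
    + rho ^+ 2 * gam * (gam * (sqn (U + V - d) + lam ^+ 2 * sqn (U - w0))
        - (lam * sqn (V - d + w0) + lam * dotp (d - V - U) (w0 - U))).
Proof. vec_ring. Qed.

Lemma jensen n (a : nat -> 'rV[R]_n) (c : nat -> R) (a0 : 'rV[R]_n) (k : nat) (G : R) :
  (forall j, (1 <= j)%N -> 0 <= c j) -> G = \sum_(1 <= j < k.+1) c j -> 0 < G ->
  G * sqn (a0 - G^-1 *: \sum_(1 <= j < k.+1) c j *: a j)
  <= \sum_(1 <= j < k.+1) c j * sqn (a0 - a j).
Proof.
move=> c0 HG G0.
set m := G^-1 *: _.
have E : forall j, sqn (a0 - a j) = sqn (a0 - m) + 2 * dotp (a0 - m) (m - a j) + sqn (m - a j).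
  by move=> j; vec_ring.
under eq_bigr do rewrite E.
under eq_bigr do rewrite mulrDr mulrDr.

rewrite big_split big_split /= -mulr_suml.
have -> : \sum_(1 <= i < k.+1) c i * (2 * dotp (a0 - m) (m - a i))
   = 2 * dotp (a0 - m) (\sum_(1 <= i < k.+1) c i *: (m - a i)).
  rewrite dotp_sumr mulr_sumr; apply: eq_bigr => j _; rewrite dotpZr; ring.
have -> : \sum_(1 <= i < k.+1) c i *: (m - a i) = 0.
  rewrite (eq_bigr (fun i => c i *: m - c i *: a i)); last by move=> j _; rewrite scalerBr.
  rewrite sumrB -scaler_suml /m scalerA -HG mulfV ?scale1r ?subrr //.
  by rewrite gt_eqF.
rewrite dotp0r mulr0 addr0 -HG lerDl big_nat_cond; apply: sumr_ge0 => j /andP [/andP [j1 _] _].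
by apply: mulr_ge0; [exact: c0|exact: sqn_ge0].
Qed.






Lemma dotpDl n (a b c : 'rV[R]_n) : dotp (b + c) a = dotp b a + dotp c a.
Proof. vec_ring. Qed.
Lemma dotpNr n (a b : 'rV[R]_n) : dotp a (- b) = - dotp a b.
Proof. vec_ring. Qed.
Lemma dotpNl n (a b : 'rV[R]_n) : dotp (- a) b = - dotp a b.
Proof. vec_ring. Qed.
Lemma dotpBr n (a b c : 'rV[R]_n) : dotp a (b - c) = dotp a b - dotp a c.
Proof. vec_ring. Qed.
Lemma dotpBl n (a b c : 'rV[R]_n) : dotp (b - c) a = dotp b a - dotp c a.
Proof. vec_ring. Qed.

Lemma real_lim (a b c : R) : 0 <= c -> (forall t, 0 < t < 1 -> a <= b + t * c) -> a <= b.
Proof.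
move=> c0 H; case: (leP a b) => // hba; exfalso.
have e0 : 0 < a - b by rewrite subr_gt0.
have D0 : 0 < a - b + c + 1 by lra.
set t := (a - b) / (a - b + c + 1).
have t0 : 0 < t by rewrite divr_gt0.
have t1 : t < 1 by rewrite ltr_pdivrMr // mul1r; lra.
have := H t; rewrite t0 t1 => /(_ isT).
have : t * c < a - b.
  rewrite /t mulrAC ltr_pdivrMr //; rewrite -subr_gt0.
  have -> : (a - b) * (a - b + c + 1) - (a - b) * c = (a - b) * (a - b + 1) by ring.
  by apply: mulr_gt0 => //; lra.
lra.
Qed.

Lemma subgrad_min m (f : 'rV[R]_m -> \bar R) (q : 'rV[R]_m -> R) (u0 s : 'rV[R]_m)
  (c : 'rV[R]_m -> R) :
  convex_fun f -> (forall x, f x != -oo%E) -> f u0 \is a fin_num ->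
  (forall x, (f u0 + (q u0)%:E <= f x + (q x)%:E)%E) ->
  (forall x t, q (t *: x + (1 - t) *: u0) - q u0 = - t * dotp s (x - u0) + t ^+ 2 * c x) ->
  (forall x, 0 <= c x) ->
  forall x, (f u0 + (dotp s (x - u0))%:E <= f x)%E.
Proof.
move=> cvx nm fin0 Hmin Hq c0 x.
have := nm x; case Ex: (f x) => [r| |] // _; last by rewrite leey.
move: fin0; case Eu: (f u0) => [a| |] // _.
rewrite -EFinD lee_fin.
suff : a <= r - dotp s (x - u0) by lra.
apply: (real_lim _ _ _ (c0 x)) => t /andP [t0 t1].
have h1 := Hmin (t *: x + (1 - t) *: u0).
have h2 := cvx x u0 t (introT andP (conj t0 t1)).
rewrite Ex Eu -!EFinM -EFinD in h2.
set xt := (t *: x + (1 - t) *: u0) in h1 h2.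
have h3 : (f xt + (q xt)%:E <= (t * r + (1 - t) * a + q xt)%:E)%E.
  by rewrite EFinD leeD2r.
have := le_trans h1 h3; rewrite Eu -EFinD lee_fin => h4.
have h5 := Hq x t.
rewrite -(ler_pM2l t0).
have -> : t * (r - dotp s (x - u0) + t * c x) = t * r - t * dotp s (x - u0) + t ^+ 2 * c x by ring.
lra.
Qed.

Lemma conj_ineq m (f : 'rV[R]_m -> \bar R) (u0 s : 'rV[R]_m) :
  f u0 \is a fin_num -> (forall x, (f u0 + (dotp s (x - u0))%:E <= f x)%E) ->
  fconj f s = ((dotp s u0)%:E - f u0)%E /\
  forall s', (fconj f s + (dotp (s' - s) u0)%:E <= fconj f s')%E.
Proof.
case Eu: (f u0) => [a| |] // _ H.
have lb : forall s', ((dotp s' u0 - a)%:E <= fconj f s')%E.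
  move=> s'; apply: ereal_sup_ubound; exists u0 => //; by rewrite Eu EFinB.
have eq : fconj f s = (dotp s u0 - a)%:E.
  apply/eqP; rewrite eq_le lb andbT; apply: ge_ereal_sup => _ [x _ <-].
  have := H x; case Ex: (f x) => [r| |] //.
    rewrite -?EFinB -!EFinD !lee_fin dotpBr; lra.
  by rewrite leNye.
split; first by rewrite eq EFinB.
move=> s'; rewrite eq -EFinD; apply: le_trans (lb s'); rewrite lee_fin dotpBl; lra.
Qed.




Lemma shiftT m n (M : 'M[R]_(m, n)) (a b : 'rV[R]_n) (u : 'rV[R]_m) :
  dotp (- (a *m M^T) - - (b *m M^T)) u = dotp (u *m M) (b - a).
Proof.
have -> : - (a *m M^T) - - (b *m M^T) = (b - a) *m M^T by rewrite mulmxBl opprK addrC.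
by rewrite dotpC dotp_mulmxT.
Qed.

Lemma mono_h1 m1 n (f : 'rV[R]_m1 -> \bar R) (M : 'M[R]_(m1, n)) (Zs Ws y : 'rV[R]_n)
  (u0 : 'rV[R]_m1) :
  subdiff (h1 f M) Zs (- Ws) -> f u0 \is a fin_num ->
  (forall x, (f u0 + (dotp (- (y *m M^T)) (x - u0))%:E <= f x)%E) ->
  0 <= dotp (y - Zs) (- (u0 *m M) + Ws).
Proof.
move=> [finZ HZ] fin0 Hs.
have [eq ineq] := @conj_ineq _ _ _ _ fin0 Hs.
have A := ineq (- (Zs *m M^T)).
have B := HZ y.
rewrite /h1 in finZ B; rewrite eq in A B; rewrite shiftT in A.
move: finZ A B; case: (fconj f (- (Zs *m M^T))) => [b| |] // _.
move: fin0; case: (f u0) => [a| |] // _.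
rewrite -!EFinB -!EFinD !lee_fin => A B.
rewrite dotpDr dotpNr; rewrite dotpNl in B; rewrite (dotpC _ Ws) in B; rewrite (dotpC _ (u0 *m M)) in A.
lra.
Qed.

Lemma mono_h2 m2 n (g : 'rV[R]_m2 -> \bar R) (C : 'M[R]_(m2, n)) (d Zs Ws x : 'rV[R]_n)
  (v0 : 'rV[R]_m2) :
  subdiff (h2 g C d) Zs Ws -> g v0 \is a fin_num ->
  (forall y, (g v0 + (dotp (- (x *m C^T)) (y - v0))%:E <= g y)%E) ->
  0 <= dotp (x - Zs) (d - v0 *m C - Ws).
Proof.
move=> [finZ HZ] fin0 Hs.
have [eq ineq] := @conj_ineq _ _ _ _ fin0 Hs.
have A := ineq (- (Zs *m C^T)).
have B := HZ x.
rewrite /h2 in finZ B; rewrite eq in A B; rewrite shiftT in A.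
move: finZ A B; rewrite fin_numD => /andP [].
case: (fconj g (- (Zs *m C^T))) => [b| |] // _ _.
move: fin0; case: (g v0) => [a| |] // _.
rewrite -?EFinB -!EFinD -?EFinB !lee_fin => A B.
rewrite !dotpBr (dotpC _ (x - Zs) d) dotpBr.
rewrite (dotpC _ (v0 *m C)) in A; rewrite (dotpC _ Ws) in B; lra.
Qed.


Section Core.
Variables (n : nat) (z w U V : nat -> 'rV[R]_n) (d Zs Ws : 'rV[R]_n) (lam : R)
  (gam rho : nat -> R).

Definition xx j := z j.-1 + lam *: w j.-1 + lam *: (V j - d).
Definition yy j := xx j - lam *: (w j.-1 - U j).
Definition phi j Z W := dotp (xx j - Z) (d - V j - W) + dotp (yy j - Z) (- U j + W).

Hypothesis Hz : forall j, (1 <= j)%N -> z j = z j.-1 + (rho j * gam j) *: (U j + V j - d).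
Hypothesis Hw : forall j, (1 <= j)%N ->
  w j = w j.-1 - (rho j * gam j * lam) *: (w j.-1 - U j).
Hypothesis Hg : forall j, (1 <= j)%N ->
  gam j * (sqn (U j + V j - d) + lam ^+ 2 * sqn (U j - w j.-1))
  = lam * sqn (V j - d + w j.-1) + lam * dotp (d - V j - U j) (w j.-1 - U j).
Hypothesis Hgam : forall j, (1 <= j)%N -> 0 <= gam j.
Hypothesis Hrho : forall j, (1 <= j)%N -> 0 <= rho j <= 2.
Hypothesis Hmon : forall j, (1 <= j)%N -> 0 <= phi j Zs Ws.
Hypothesis Hlam : 0 < lam.

Lemma tele Z W k :
  \sum_(1 <= j < k.+1) 2 * (rho j * gam j) * phi j Z W
   + (sqn (z k - Z) + sqn (w k - W)) <= sqn (z 0 - Z) + sqn (w 0 - W).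
Proof.
elim: k => [|k IH]; first by rewrite big_geq // add0r.
rewrite big_nat_recr //=.
have k1 : (1 <= k.+1)%N by [].
rewrite (Hz _ k1) (Hw _ k1) step_id /= -(Hg _ k1) subrr mulr0 addr0.
rewrite /phi /yy /xx /=.
set T := 2 * _ * _.
set N := _ * (rho k.+1 - 2) * _.
have N0 : N <= 0.
  have [r0 r2] := andP (Hrho _ k1). rewrite /N.
  apply: mulr_le0_ge0; last first.
    apply: mulr_ge0; first exact: Hgam.
    by apply: addr_ge0; [exact: sqn_ge0|apply: mulr_ge0; [exact: sqr_ge0|exact: sqn_ge0]].
  apply: mulr_ge0_le0; first by apply: mulr_ge0 => //; exact: Hgam.
  by rewrite subr_le0.
move: IH; rewrite /phi /yy /xx /= => IH.
lra.
Qed.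

Lemma fejer k : sqn (z k - Zs) + sqn (w k - Ws) <= sqn (z 0 - Zs) + sqn (w 0 - Ws).
Proof.
apply: le_trans (tele Zs Ws k); rewrite lerDr.
rewrite big_nat_cond; apply: sumr_ge0 => j /andP [/andP [j1 _] _]; apply: mulr_ge0; last exact: Hmon.
apply: mulr_ge0 => //; apply: mulr_ge0; [by case/andP: (Hrho _ j1)|exact: Hgam].
Qed.


Lemma dotpZl' m (a b : 'rV[R]_m) c : dotp (c *: a) b = c * dotp a b.
Proof. by rewrite dotpC dotpZr dotpC. Qed.

Lemma ergo_id k (G : R) (Ub Vb yb : 'rV[R]_n) :
  G = \sum_(1 <= j < k.+1) rho j * gam j -> G != 0 ->
  Ub = G^-1 *: \sum_(1 <= j < k.+1) (rho j * gam j) *: U j ->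
  Vb = G^-1 *: \sum_(1 <= j < k.+1) (rho j * gam j) *: V j ->
  yb = G^-1 *: \sum_(1 <= j < k.+1) (rho j * gam j) *: yy j ->
  \sum_(1 <= j < k.+1) rho j * gam j * (dotp (Ub - U j) (yy j) + dotp (Vb - V j) (xx j))
  = \sum_(1 <= j < k.+1) rho j * gam j * phi j yb (d - Vb).
Proof.
move=> HG G0 HUb HVb Hyb.
have E : forall j, phi j yb (d - Vb) = dotp (Ub - U j) (yy j) + dotp (Vb - V j) (xx j)
   + (dotp (yy j) (d - Ub - Vb) - dotp yb (d - U j - V j)).
  by move=> j; rewrite /phi; vec_ring.
have S1 : \sum_(1 <= j < k.+1) (rho j * gam j) *: yy j = G *: yb.
  by rewrite Hyb scalerA mulfV // scale1r.
have S2 : \sum_(1 <= j < k.+1) (rho j * gam j) *: (d - U j - V j) = G *: (d - Ub - Vb).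
  rewrite (eq_bigr (fun j => (rho j * gam j) *: d - (rho j * gam j) *: U j
                               - (rho j * gam j) *: V j)); last by move=> j _; rewrite !scalerBr.
  rewrite !sumrB -scaler_suml -HG HUb HVb !scalerBr !scalerA mulfV // !scale1r.
  done.
transitivity (\sum_(1 <= j < k.+1) rho j * gam j * (dotp (Ub - U j) (yy j) + dotp (Vb - V j) (xx j))
   + (dotp (\sum_(1 <= j < k.+1) (rho j * gam j) *: yy j) (d - Ub - Vb)
      - dotp yb (\sum_(1 <= j < k.+1) (rho j * gam j) *: (d - U j - V j)))).
  by rewrite S1 S2 dotpZl' dotpZr subrr addr0.
rewrite dotp_suml dotp_sumr -sumrB -big_split /=; apply: eq_bigr => j _.
by rewrite E dotpZl' dotpZr; ring.
Qed.

Lemma core_bound k (G : R) (Ub Vb : 'rV[R]_n) :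
  G = \sum_(1 <= j < k.+1) rho j * gam j -> 0 < G ->
  Ub = G^-1 *: \sum_(1 <= j < k.+1) (rho j * gam j) *: U j ->
  Vb = G^-1 *: \sum_(1 <= j < k.+1) (rho j * gam j) *: V j ->
  G^-1 * \sum_(1 <= j < k.+1) rho j * gam j * dotp (Ub - U j) (yy j)
  + G^-1 * \sum_(1 <= j < k.+1) rho j * gam j * dotp (Vb - V j) (xx j)
  <= G^-1 * (G^-1 * (\sum_(1 <= j < k.+1) rho j * gam j *
        (lam ^+ 2 * sqn (U j + V j - d) + sqn (d - V j - w j.-1)))
      + 4 * (sqn (z 0 - Zs) + sqn (w 0 - Ws))).
Proof.
move=> HG G0 HUb HVb.
have G0' : G != 0 by rewrite gt_eqF.
have tau0 : forall j, (1 <= j)%N -> 0 <= rho j * gam j.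
  by move=> j j1; apply: mulr_ge0; [by case/andP: (Hrho _ j1)|exact: Hgam].
set yb := G^-1 *: \sum_(1 <= j < k.+1) (rho j * gam j) *: yy j.
rewrite -mulrDr -big_split /=.
under eq_bigr do rewrite -mulrDr.
rewrite (ergo_id _ _ _ _ _ HG G0' HUb HVb (erefl yb)).
set D0 := sqn (z 0 - Zs) + sqn (w 0 - Ws).
set S := \sum_(1 <= j < k.+1) rho j * gam j * (lam ^+ 2 * sqn (U j + V j - d) + sqn (d - V j - w j.-1)).
set Phi := \sum_(1 <= j < k.+1) rho j * gam j * phi j yb (d - Vb).
set P0 := sqn (z 0 - yb) + sqn (w 0 - (d - Vb)).
have T1 : 2 * Phi <= P0.
  apply: le_trans (tele yb (d - Vb) k).
  rewrite /Phi mulr_sumr.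
  have : 0 <= sqn (z k - yb) + sqn (w k - (d - Vb)) by apply: addr_ge0; exact: sqn_ge0.
  under eq_bigr do rewrite mulrA.
  move=> h; lra.
have J1 := @jensen _ yy _ (z 0) _ _ tau0 HG G0.
have HdV : d - Vb = G^-1 *: \sum_(1 <= j < k.+1) (rho j * gam j) *: (d - V j).
  under eq_bigr do rewrite scalerBr.
  by rewrite sumrB -scaler_suml -HG scalerBr scalerA mulVf // scale1r HVb.
have J2 := @jensen _ (fun j => d - V j) _ (w 0) _ _ tau0 HG G0.
rewrite -HdV in J2. rewrite -/yb in J1.
have Hj : forall j, (1 <= j)%N ->
   sqn (z 0 - yy j) + sqn (w 0 - (d - V j))
   <= 8 * D0 + 2 * (lam ^+ 2 * sqn (U j + V j - d) + sqn (d - V j - w j.-1)).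
  move=> j j1.
  have F := fejer j.-1.
  have e1 : sqn (z j.-1 - yy j) = lam ^+ 2 * sqn (U j + V j - d) by rewrite /yy /xx; vec_ring.
  have e2 : sqn (w j.-1 - (d - V j)) = sqn (d - V j - w j.-1) by vec_ring.
  have e3 : sqn (Zs - z j.-1) = sqn (z j.-1 - Zs) by vec_ring.
  have e4 : sqn (Ws - w j.-1) = sqn (w j.-1 - Ws) by vec_ring.
  have a1 := sqn_add_le _ (z 0 - z j.-1) (z j.-1 - yy j).
  have a2 := sqn_add_le _ (w 0 - w j.-1) (w j.-1 - (d - V j)).
  have a3 := sqn_add_le _ (z 0 - Zs) (Zs - z j.-1).
  have a4 := sqn_add_le _ (w 0 - Ws) (Ws - w j.-1).
  have q1 : z 0 - z j.-1 + (z j.-1 - yy j) = z 0 - yy j by rewrite addrA subrK.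
  have q2 : w 0 - w j.-1 + (w j.-1 - (d - V j)) = w 0 - (d - V j) by rewrite addrA subrK.
  have q3 : z 0 - Zs + (Zs - z j.-1) = z 0 - z j.-1 by rewrite addrA subrK.
  have q4 : w 0 - Ws + (Ws - w j.-1) = w 0 - w j.-1 by rewrite addrA subrK.
  rewrite q1 e1 in a1; rewrite q2 e2 in a2; rewrite q3 e3 in a3; rewrite q4 e4 in a4.
  rewrite /D0; lra.
have T2 : G * P0 <= 8 * D0 * G + 2 * S.
  apply: le_trans (_ : \sum_(1 <= j < k.+1) rho j * gam j * (sqn (z 0 - yy j) + sqn (w 0 - (d - V j))) <= _).
    rewrite /P0 mulrDr; under eq_bigr do rewrite mulrDr.
    by rewrite big_split /=; apply: lerD.
  rewrite HG /S mulr_sumr mulr_sumr -big_split /= big_nat_cond [X in _ <= X]big_nat_cond.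
  apply: ler_sum => j /andP [/andP [j1 _] _].
  have h := ler_wpM2l (tau0 j j1) (Hj j j1).
  apply: le_trans h _; rewrite le_eqVlt; apply/orP; left; apply/eqP; ring.
have T3 : P0 <= 8 * D0 + 2 * (G^-1 * S).
  have Gi : 0 <= G^-1 by rewrite invr_ge0 ltW.
  have := ler_wpM2l Gi T2.
  have e1 : G^-1 * (G * P0) = P0 by rewrite mulKf.
  have e2 : G^-1 * (8 * D0 * G + 2 * S) = 8 * D0 + 2 * (G^-1 * S).
    by field; exact: G0'.
  by rewrite e1 e2.

apply: ler_wpM2l; first by rewrite invr_ge0 ltW.
lra.
Qed.

End Core.
End Aux.

Section S4.
Variable R : realType.

Lemma saddle_Se m1 m2 n (f : 'rV[R]_m1 -> \bar R) (g : 'rV[R]_m2 -> \bar R)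
  (M : 'M[R]_(m1, n)) (C : 'M[R]_(m2, n)) (d : 'rV[R]_n) u0 v0 z0 :
  (forall x, f x != -oo%E) -> (forall x, g x != -oo%E) ->
  saddle_point f g M C d u0 v0 z0 -> Se f g M C d (z0, u0 *m M).
Proof.
move=> nf ng [fin Hmin Hmax]; rewrite /lagr in fin Hmin Hmax.
move: fin; rewrite !fin_numD => /andP [/andP [ff fg] _].
have r0 : u0 *m M + v0 *m C - d = 0.
  apply: sqn_eq0; apply/eqP; rewrite eq_le sqn_ge0 andbT.
  have := Hmax (z0 + (u0 *m M + v0 *m C - d)).
  move: ff fg; case: (f u0) => [a| |] //; case: (g v0) => [b| |] // _ _.
  rewrite -!EFinD lee_fin dotpDr /sqn; lra.
have hu : u0 *m M = d - v0 *m C.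
  apply/rowP => i; have := congr1 (fun A : 'rV[R]_n => A 0 i) r0; rewrite !mxE => h; lra.
have sf : forall x, (f u0 + (dotp (- (z0 *m M^T)) (x - u0))%:E <= f x)%E.
  move=> x; have := Hmin x v0; have := nf x.
  have E1 : dotp (- (z0 *m M^T)) (x - u0) = dotp (u0 *m M) z0 - dotp (x *m M) z0.
    by rewrite dotpNl dotpC dotp_mulmxT mulmxBl dotpBl opprB.
  rewrite E1.
  move: ff fg; case: (f u0) => [a| |] //; case: (g v0) => [b| |] // _ _.
  case: (f x) => [c| |] // _; last by move=> _; rewrite leey.
  rewrite -!EFinD !lee_fin !dotpDl ?dotpBl ?dotpNl; lra.
have sg : forall y, (g v0 + (dotp (- (z0 *m C^T)) (y - v0))%:E <= g y)%E.
  move=> y; have := Hmin u0 y; have := ng y.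
  have E1 : dotp (- (z0 *m C^T)) (y - v0) = dotp (v0 *m C) z0 - dotp (y *m C) z0.
    by rewrite dotpNl dotpC dotp_mulmxT mulmxBl dotpBl opprB.
  rewrite E1.
  move: ff fg; case: (f u0) => [a| |] //; case: (g v0) => [b| |] // _ _.
  case: (g y) => [c| |] // _; last by move=> _; rewrite leey.
  rewrite -!EFinD !lee_fin !dotpDl ?dotpBl ?dotpNl; lra.
split.
- have [eq ineq] := @conj_ineq _ _ _ _ _ ff sf.
  split; first by rewrite /h1 eq; move: ff; case: (f u0).
  move=> z'; rewrite /h1.
  have := ineq (- (z' *m M^T)); rewrite shiftT.
  have -> : dotp (- (u0 *m M)) (z' - z0) = dotp (u0 *m M) (z0 - z').
    by rewrite dotpNl !dotpBr opprB.
  done.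
- have [eq ineq] := @conj_ineq _ _ _ _ _ fg sg.
  split; first by rewrite /h2 eq; move: fg; case: (g v0).
  move=> z'; rewrite /h2 /=.
  have := ineq (- (z' *m C^T)); rewrite shiftT eq.
  move: fg; case: (g v0) => [b| |] // _.
  move: (fconj g (- (z' *m C^T))) => Gz.
  rewrite -!EFinB -!EFinD => H.
  apply: le_trans (leeD2r (dotp d z')%:E H); rewrite -EFinD lee_fin.
  rewrite hu !dotpBl !dotpBr; lra.
Qed.


Lemma fin_min m (f : 'rV[R]_m -> \bar R) u (q : 'rV[R]_m -> R) :
  proper_fun f -> (forall x, (f u + (q u)%:E <= f x + (q x)%:E)%E) -> f u \is a fin_num.
Proof.
case=> nm [x0 fx0] H; have := H x0; have := nm u.
move: fx0; case: (f x0) => [c| |] // _; case: (f u) => [a| |] //.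
Qed.

Lemma lin_comb m (x u0 : 'rV[R]_m) (t : R) : t *: x + (1 - t) *: u0 = u0 + t *: (x - u0).
Proof. by apply/rowP => i; rewrite !mxE; ring. Qed.

Lemma quad_diff n (A P H : 'rV[R]_n) (lam t : R) :
  (dotp A (P + t *: H) + lam / 2 * sqn (P + t *: H)) - (dotp A P + lam / 2 * sqn P)
  = t * dotp (A + lam *: P) H + t ^+ 2 * (lam / 2 * sqn H).
Proof. rewrite /sqn /dotp;
  repeat progress (rewrite ?(mulrDr, mulrBr, mulrN, mulr_sumr) -?sumrN -?big_split /=).
by apply: eq_bigr => i _; rewrite !mxE; field.
Qed.

Lemma sqn_pos n (a b : 'rV[R]_n) : enorm a + enorm b != 0 -> 0 < sqn a + sqn b.
Proof.
move=> H; rewrite lt_def addr_ge0 ?sqn_ge0 // andbT; apply/negP => /eqP E.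
have ha : sqn a = 0 by have := @sqn_ge0 _ _ a; have := @sqn_ge0 _ _ b; lra.
have hb : sqn b = 0 by have := @sqn_ge0 _ _ a; have := @sqn_ge0 _ _ b; lra.
by move: H; rewrite /enorm ha hb sqrtr0 addr0 eqxx.
Qed.

Section PMM.
Variables (m1 m2 n : nat) (f : 'rV[R]_m1 -> \bar R) (g : 'rV[R]_m2 -> \bar R)
  (M : 'M[R]_(m1, n)) (C : 'M[R]_(m2, n)) (d : 'rV[R]_n) (lam rhob : R)
  (u : nat -> 'rV[R]_m1) (v : nat -> 'rV[R]_m2) (z w : nat -> 'rV[R]_n)
  (gam rho : nat -> R).
Hypotheses (pf : pcc f) (pg : pcc g) (Hlam : 0 < lam) (Hrb : 0 <= rhob < 1)
  (HP : PMM_run f g M C d lam rhob u v z w gam rho).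

Lemma pmm_f j : (1 <= j)%N -> f (u j) \is a fin_num /\
  forall x, (f (u j) + (dotp (- ((z j.-1 + lam *: w j.-1 + lam *: (v j *m C - d)
        - lam *: (w j.-1 - u j *m M)) *m M^T)) (x - u j))%:E <= f x)%E.
Proof.
move=> j1; have [_ Hu _ _ _] := HP _ j1.
case: pf => pr _ cvx.
set A := z j.-1 + lam *: (v j *m C - d).
have fin := @fin_min _ f (u j) (fun x => dotp A (x *m M) + lam / 2 * sqn (x *m M)) pr Hu.
split => //.
set y := _ - _.
have ey : y = A + lam *: (u j *m M).
  rewrite /y /A; move: (u j *m M) (v j *m C) => P Q.
  by apply/rowP => i; rewrite !mxE; ring.
apply: (@subgrad_min _ _ f (fun x => dotp A (x *m M) + lam / 2 * sqn (x *m M)) (u j) _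
          (fun x => lam / 2 * sqn ((x - u j) *m M))) => //.
- by case: pr.
- move=> x t; rewrite lin_comb mulmxDl -scalemxAl quad_diff -ey.
  congr (_ + _); rewrite dotpNl [dotp (_ *m _^T) _]dotpC dotp_mulmxT [dotp _ ((_ - _) *m _)]dotpC; ring.
- by move=> x; apply: mulr_ge0; [apply: divr_ge0; [exact: ltW|] |exact: sqn_ge0].
Qed.

Lemma pmm_g j : (1 <= j)%N -> g (v j) \is a fin_num /\
  forall x, (g (v j) + (dotp (- ((z j.-1 + lam *: w j.-1 + lam *: (v j *m C - d)) *m C^T))
        (x - v j))%:E <= g x)%E.
Proof.
move=> j1; have [Hv _ _ _ _] := HP _ j1.
case: pg => pr _ cvx.
set B := z j.-1 + lam *: w j.-1.
have fin := @fin_min _ g (v j) (fun x => dotp B (x *m C - d) + lam / 2 * sqn (x *m C - d)) pr Hv.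
split => //.
apply: (@subgrad_min _ _ g (fun x => dotp B (x *m C - d) + lam / 2 * sqn (x *m C - d)) (v j) _
          (fun x => lam / 2 * sqn ((x - v j) *m C))) => //.
- by case: pr.
- move=> x t; rewrite lin_comb mulmxDl -scalemxAl.
  rewrite (_ : v j *m C + t *: ((x - v j) *m C) - d = (v j *m C - d) + t *: ((x - v j) *m C));
    last by rewrite addrAC.
  rewrite quad_diff.
  congr (_ + _); rewrite dotpNl [dotp (_ *m _^T) _]dotpC dotp_mulmxT [dotp _ ((_ - _) *m _)]dotpC; ring.
- by move=> x; apply: mulr_ge0; [apply: divr_ge0; [exact: ltW|] |exact: sqn_ge0].
Qed.

Lemma pmm_gam j : (1 <= j)%N ->
  [/\ gam j * (sqn (u j *m M + v j *m C - d) + lam ^+ 2 * sqn (u j *m M - w j.-1))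
      = lam * sqn (v j *m C - d + w j.-1)
        + lam * dotp (d - v j *m C - u j *m M) (w j.-1 - u j *m M),
      0 < gam j & 0 < rho j <= 2].
Proof.
move=> j1; have [_ _ Hne [Hg Hr] _] := HP _ j1.
move: Hne Hg; move: (u j *m M) (v j *m C) (w j.-1) => P Q W Hne Hg.
have hp := @sqn_pos _ _ _ Hne.
set D := sqn (P + Q - d) + lam ^+ 2 * sqn (P - W).
set N := lam * sqn (Q - d + W) + lam * dotp (d - Q - P) (W - P).
have e1 : sqn (P - W) = sqn (W - P) by vec_ring.
have e2 : 2 * (sqn (Q - d + W) + dotp (d - Q - P) (W - P))
   = sqn (P + Q - d) + sqn (P - W) + sqn (Q - d + W) by vec_ring.
have D0 : 0 < D.
  rewrite /D; have := @sqn_ge0 _ _ (P + Q - d); have := @sqn_ge0 _ _ (P - W).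
  have l2 : 0 < lam ^+ 2 by rewrite exprn_gt0.
  move=> h1 h2.
  case: (ltrP 0 (sqn (P - W))) => h3.
    by apply: ltr_pwDr => //; apply: mulr_gt0.
  have h4 : sqn (P - W) = 0 by apply/eqP; rewrite eq_le h3 h1.
  rewrite h4 mulr0 addr0; lra.
have N0 : 0 < N.
  rewrite /N -mulrDr; apply: mulr_gt0 => //.
  have := @sqn_ge0 _ _ (Q - d + W); lra.
split.
- by rewrite Hg divfK // gt_eqF.
- by rewrite Hg divr_gt0.
- case/andP: Hrb => r0 r1; case/andP: Hr => h1 h2.
  apply/andP; split; lra.
Qed.

End PMM.
End S4.

Theorem mainTheorem7 (R : realType) (m1 m2 n : nat)
  (f : 'rV[R]_m1 -> \bar R) (g : 'rV[R]_m2 -> \bar R)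
  (M : 'M[R]_(m1, n)) (C : 'M[R]_(m2, n)) (d : 'rV[R]_n)
  (lam rhob : R)
  (u : nat -> 'rV[R]_m1) (v : nat -> 'rV[R]_m2) (z w : nat -> 'rV[R]_n)
  (gam rho : nat -> R) :
  pcc f -> pcc g ->
  (exists u0 v0 z0, saddle_point f g M C d u0 v0 z0) ->
  (exists p, rel_int (edom (fconj f)) p /\ exists q : 'rV[R]_n, p = q *m M^T) ->
  (exists p, rel_int (edom (fconj g)) p /\ exists q : 'rV[R]_n, p = q *m C^T) ->
  0 < lam -> 0 <= rhob < 1 ->
  PMM_run f g M C d lam rhob u v z w gam rho ->
  let x := fun k => z k.-1 + lam *: w k.-1 + lam *: (v k *m C - d) in
  let y := fun k => x k - lam *: (w k.-1 - u k *m M) in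
  let Gam := fun k => \sum_(1 <= j < k.+1) rho j * gam j in
  let ubar := fun k => (Gam k)^-1 *: \sum_(1 <= j < k.+1) (rho j * gam j) *: u j in
  let vbar := fun k => (Gam k)^-1 *: \sum_(1 <= j < k.+1) (rho j * gam j) *: v j in
  let epsu := fun k => (Gam k)^-1 *
      \sum_(1 <= j < k.+1) rho j * gam j * dotp (u j - ubar k) (- (y j *m M^T)) in
  let epsv := fun k => (Gam k)^-1 *
      \sum_(1 <= j < k.+1) rho j * gam j * dotp (v j - vbar k) (- (x j *m C^T)) in
  let d0 := dist2 (z 0%N, w 0%N) (Se f g M C d) in
  forall k : nat, (1 <= k)%N ->
    epsu k + epsv k <=
      (Gam k)^-1 * ((Gam k)^-1 *
        (\sum_(1 <= j < k.+1) rho j * gam j *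
           (lam ^+ 2 * sqn (u j *m M + v j *m C - d)
            + sqn (d - v j *m C - w j.-1)))
        + 4 * d0 ^+ 2).
Proof.
move=> pf pg [u0 [v0 [z0 Hsad]]] _ _ Hlam Hrb HP x y Gam ubar vbar epsu epsv d0 k k1.
have nf : forall x, f x != -oo%E by case: pf => [[nf _] _ _].
have ng : forall x, g x != -oo%E by case: pg => [[ng _] _ _].
have HSe := @saddle_Se _ _ _ _ f g M C d u0 v0 z0 nf ng Hsad.
pose U := fun j => u j *m M.
pose V := fun j => v j *m C.
have Hz : forall j, (1 <= j)%N -> z j = z j.-1 + (rho j * gam j) *: (U j + V j - d).
  by move=> j j1; have [_ _ _ _ [hz _]] := HP _ j1.
have Hw : forall j, (1 <= j)%N -> w j = w j.-1 - (rho j * gam j * lam) *: (w j.-1 - U j).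
  by move=> j j1; have [_ _ _ _ [_ hw]] := HP _ j1.
have HG := @pmm_gam _ _ _ _ f g M C d lam rhob u v z w gam rho Hlam Hrb HP.
have Hg : forall j, (1 <= j)%N ->
  gam j * (sqn (U j + V j - d) + lam ^+ 2 * sqn (U j - w j.-1))
  = lam * sqn (V j - d + w j.-1) + lam * dotp (d - V j - U j) (w j.-1 - U j).
  by move=> j j1; have [] := HG j j1.
have Hgam : forall j, (1 <= j)%N -> 0 <= gam j.
  by move=> j j1; have [_ h _] := HG j j1; exact: ltW.
have Hrho : forall j, (1 <= j)%N -> 0 <= rho j <= 2.
  by move=> j j1; have [_ _ /andP [h1 h2]] := HG j j1; rewrite h2 ltW.
have G0 : 0 < Gam k.
  case: k k1 {epsu epsv} => // k _.
  rewrite /Gam big_nat_recr //=.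
  have [_ h1 /andP [h2 _]] := HG k.+1 isT.
  apply: ltr_wpDl; last by apply: mulr_gt0.
  rewrite big_nat_cond; apply: sumr_ge0 => j /andP [/andP [j1 _] _].
  by apply: mulr_ge0; [case/andP: (Hrho _ j1)|exact: Hgam].
have Hmon : forall q, Se f g M C d q -> forall j, (1 <= j)%N -> 0 <= @phi _ _ z w U V d lam j q.1 q.2.
  move=> [Zs Ws] [S1 S2] j j1 /=.
  have [fu hu] := @pmm_f _ _ _ _ f g M C d lam rhob u v z w gam rho pf Hlam HP j j1.
  have [fv hv] := @pmm_g _ _ _ _ f g M C d lam rhob u v z w gam rho pg Hlam HP j j1.
  rewrite /phi /yy /xx; apply: addr_ge0.
  - exact: (@mono_h2 _ _ _ g C d Zs Ws _ (v j) S2 fv hv).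
  - exact: (@mono_h1 _ _ _ f M Zs Ws _ (u j) S1 fu hu).
set G := Gam k.
have HUb : ubar k *m M = G^-1 *: \sum_(1 <= j < k.+1) (rho j * gam j) *: U j.
  rewrite /ubar -scalemxAl mulmx_suml; congr (_ *: _); apply: eq_bigr => j _.
  by rewrite -scalemxAl.
have HVb : vbar k *m C = G^-1 *: \sum_(1 <= j < k.+1) (rho j * gam j) *: V j.
  rewrite /vbar -scalemxAl mulmx_suml; congr (_ *: _); apply: eq_bigr => j _.
  by rewrite -scalemxAl.
have Eu : epsu k = G^-1 * \sum_(1 <= j < k.+1) rho j * gam j
                      * dotp (ubar k *m M - U j) (@yy _ _ z w U V d lam j).
  rewrite /epsu; congr (_ * _); apply: eq_bigr => j _; congr (_ * _).
  by rewrite dotpNr dotp_mulmxT mulmxBl -dotpNl opprB.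
have Ev : epsv k = G^-1 * \sum_(1 <= j < k.+1) rho j * gam j
                      * dotp (vbar k *m C - V j) (@xx _ _ z w V d lam j).
  rewrite /epsv; congr (_ * _); apply: eq_bigr => j _; congr (_ * _).
  by rewrite dotpNr dotp_mulmxT mulmxBl -dotpNl opprB.
rewrite Eu Ev.
set S := \sum_(1 <= j < k.+1) _ * (_ + _).
set L := _ + _.
have key : forall q, Se f g M C d q ->
    L <= G^-1 * (G^-1 * S + 4 * (sqn (z 0 - q.1) + sqn (w 0 - q.2))).
  move=> q Hq.
  exact: (@core_bound _ _ z w U V d q.1 q.2 lam gam rho Hz Hw Hg Hgam Hrho (Hmon q Hq)
           k G _ _ (erefl G) G0 HUb HVb).
set Sset := [set sqn ((z 0, w 0).1 - q.1) + sqn ((z 0, w 0).2 - q.2) | q in Se f g M C d].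
have ne : Sset !=set0 by exists (sqn (z 0 - z0) + sqn (w 0 - u0 *m M)); exists (z0, u0 *m M).
have inf0 : 0 <= inf Sset.
  apply: lb_le_inf => // _ [q _ <-]; apply: addr_ge0; exact: sqn_ge0.
have Gi : 0 <= G^-1 by rewrite invr_ge0 ltW.
have H1 : G * L - G^-1 * S <= 4 * inf Sset.
  suff : (G * L - G^-1 * S) / 4 <= inf Sset by lra.
  apply: lb_le_inf => // _ [q Hq <-] /=.
  have := ler_wpM2l (ltW G0) (key q Hq).
  rewrite mulVKf ?gt_eqF // => h; change (Gam k) with G in h; lra.
have -> : d0 ^+ 2 = inf Sset by rewrite /d0 /dist2 sqr_sqrtr.
have -> : L = G^-1 * (G * L) by rewrite mulKf ?gt_eqF.
apply: ler_wpM2l => //; lra.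
Qed.
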